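(* If $\{T_i\}_{i=1}^M$ is an extremal quantum $1$-tester on $\mathcal H_2\otimes\mathcal H_1$ with normalization $\sum_iT_i=I_2\otimes\frac1{d_1}I_1$, then $\{d_1T_i\}_{i=1}^M$ is an extremal POVM on $\mathcal H_2\otimes\mathcal H_1$.
   Context: $d_1=\dim\mathcal H_1<\infty$. A quantum $1$-tester with $M$ outcomes is a family of positive operators $\{T_i\}_{i=1}^M$ on $\mathcal H_2\otimes\mathcal H_1$ with $\sum_iT_i=I_2\otimes\rho$ for a density operator $\rho$; extremal means an extreme point of the convex set of all such testers with $M$ outcomes. An extremal POVM with $M$ outcomes is an extreme point of the convex set of $M$-outcome POVMs (positive operators summing to the identity). *)

(* Defs.v *)
(* Complex scalars: an arbitrary numClosedFieldType C
   (e.g. the complex numbers). *)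
From HB Require Import structures.
From mathcomp Require Import all_boot all_order all_algebra.
Set Implicit Arguments. Unset Strict Implicit. Unset Printing Implicit Defensive.
Import Order.TTheory GRing.Theory Num.Theory.
Local Open Scope ring_scope.

(* index of H2 (x) H1 of dimension m*n decomposed into a pair, using
   MathComp's own encoding of 'I_m * 'I_n into 'I_(m*n) (as in mxvec). *)
Definition pair_of_idx (m n : nat) (k : 'I_(m * n)) : 'I_m * 'I_n :=
  enum_val (cast_ord (esym (mxvec_cast m n)) k).

Definition kron (R : pzRingType) (m1 n1 m2 n2 : nat)
    (A : 'M[R]_(m1, n1)) (B : 'M[R]_(m2, n2)) : 'M[R]_(m1 * m2, n1 * n2) :=
  \matrix_(i, j) (A (pair_of_idx i).1 (pair_of_idx j).1 *
                  B (pair_of_idx i).2 (pair_of_idx j).2).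

Definition adjmx (C : numClosedFieldType) (m n : nat) (A : 'M[C]_(m, n)) : 'M[C]_(n, m) :=
  \matrix_(i, j) (A j i)^*.

Definition psdmx (C : numClosedFieldType) (n : nat) (A : 'M[C]_n) : Prop :=
  adjmx A = A /\ forall v : 'cV[C]_n, 0 <= (adjmx v *m A *m v) 0 0.

Definition density (C : numClosedFieldType) (n : nat) (rho : 'M[C]_n) : Prop :=
  psdmx rho /\ \tr rho = 1.

Definition povm (C : numClosedFieldType) (n M : nat) (T : 'I_M -> 'M[C]_n) : Prop :=
  (forall i, psdmx (T i)) /\ \sum_(i < M) T i = 1%:M.

Definition tester (C : numClosedFieldType) (d2 d1 M : nat)
    (T : 'I_M -> 'M[C]_(d2 * d1)) : Prop :=
  (forall i, psdmx (T i)) /\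
  exists rho : 'M[C]_d1, density rho /\ \sum_(i < M) T i = kron (1%:M : 'M[C]_d2) rho.

Definition extremal (C : numClosedFieldType) (n M : nat)
    (S : ('I_M -> 'M[C]_n) -> Prop) (T : 'I_M -> 'M[C]_n) : Prop :=
  S T /\
  forall (t : C) (T1 T2 : 'I_M -> 'M[C]_n),
    0 < t < 1 -> S T1 -> S T2 ->
    (forall i, T i = t *: T1 i + (1 - t) *: T2 i) ->
    (forall i, T1 i = T i /\ T2 i = T i).

(* Main.v *)
Require Import Defs.
From HB Require Import structures.
From mathcomp Require Import all_boot all_order all_algebra.
Import Order.TTheory GRing.Theory Num.Theory.
Local Open Scope ring_scope.

Lemma pair_inj (m n : nat) : injective (@pair_of_idx m n).
Proof.
move=> a b /enum_val_inj H; exact: (cast_ord_inj H).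
Qed.

Lemma kron_scal (C : numClosedFieldType) (d2 d1 : nat) (c : C) :
  kron (1%:M : 'M[C]_d2) (c *: (1%:M : 'M[C]_d1)) = c *: 1%:M.
Proof.
apply/matrixP => i j; rewrite !mxE.
rewrite -(inj_eq (@pair_inj d2 d1) i j).
case: (pair_of_idx i) => a b; case: (pair_of_idx j) => a' b' /=.
rewrite xpair_eqE.
by case: (a == a'); case: (b == b'); rewrite /= ?mulr1 ?mulr0 ?mul1r ?mul0r.
Qed.

Lemma psd_scale (C : numClosedFieldType) (n : nat) (c : C) (A : 'M[C]_n) :
  0 <= c -> psdmx A -> psdmx (c *: A).
Proof.
rewrite /psdmx; move=> c0 [HA Hv]; split.
  apply/matrixP => i j; rewrite !mxE rmorphM /= (geC0_conj c0).
  by rewrite -[in RHS]HA mxE.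
move=> v; rewrite -scalemxAr -scalemxAl mxE; exact: mulr_ge0.
Qed.

Lemma psd_one (C : numClosedFieldType) (n : nat) : psdmx (1%:M : 'M[C]_n).
Proof.
rewrite /psdmx; split.
  by apply/matrixP => i j; rewrite !mxE eq_sym; case: (_ == _); rewrite ?conjC1 ?conjC0.
move=> v; rewrite mulmx1 mxE; apply: sumr_ge0 => k _; rewrite mxE.
by rewrite mulrC -normCK exprn_ge0.
Qed.

Theorem mainTheorem8 (C : numClosedFieldType) (d2 d1 M : nat)
    (T : 'I_M -> 'M[C]_(d2 * d1)) :
  extremal (@tester C d2 d1 M) T ->
  \sum_(i < M) T i = kron (1%:M : 'M[C]_d2) ((d1%:R)^-1 *: (1%:M : 'M[C]_d1)) ->
  extremal (@povm C (d2 * d1) M) (fun i => d1%:R *: T i).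
Proof.
move=> [[Tpsd _] Hext] Hsum.
have [d0|dn0] := eqVneq d1 0%N.
  have triv : forall A B : 'M[C]_(d2 * d1), A = B.
    have e : (d2 * d1 = 0)%N by rewrite d0 muln0.
    move=> A B; apply/matrixP => a; case: a => a ha; exfalso; move: ha; by rewrite e.
  split; first by split => [i|]; [apply: psd_scale => //; apply: ler0n|apply: triv].
  by move=> *; split; apply: triv.
have d1R : (d1%:R : C) != 0 by rewrite pnatr_eq0.
have inv0 : 0 <= (d1%:R : C)^-1 by rewrite invr_ge0 ler0n.
split.
  split => [i|]; first by apply: psd_scale => //; apply: ler0n.
  by rewrite -scaler_sumr Hsum kron_scal scalerA mulfV // scale1r.
move=> t P1 P2 ht [P1psd P1sum] [P2psd P2sum] HP.
pose Q1 := fun i => (d1%:R : C)^-1 *: P1 i.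
pose Q2 := fun i => (d1%:R : C)^-1 *: P2 i.
have rhoD : density ((d1%:R : C)^-1 *: (1%:M : 'M[C]_d1)).
  split; first by apply: psd_scale => //; apply: psd_one.
  by rewrite mxtraceZ mxtrace1 mulVf.
have tQ1 : tester Q1.
  split => [i|]; first by apply: psd_scale.
  by exists ((d1%:R : C)^-1 *: 1%:M); split => //; rewrite kron_scal -scaler_sumr P1sum.
have tQ2 : tester Q2.
  split => [i|]; first by apply: psd_scale.
  by exists ((d1%:R : C)^-1 *: 1%:M); split => //; rewrite kron_scal -scaler_sumr P2sum.
have HT : forall i, T i = t *: Q1 i + (1 - t) *: Q2 i.
  move=> i; rewrite /Q1 /Q2 !scalerA (mulrC t) (mulrC (1 - t)) -!scalerA -scalerDr.
  by rewrite -HP scalerA mulVf // scale1r.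
have := Hext t Q1 Q2 ht tQ1 tQ2 HT => H i.
have [H1 H2] := H i.
by split; [rewrite -H1|rewrite -H2]; rewrite /Q1 /Q2 scalerA mulfV // scale1r.
Qed.
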